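(* Let $M=\frac{1}{3^{2/3}-2}$. Let the open intervals $J_n^k\subset[0,M]$ ($n\ge 1$, $1\le k\le 2^{n-1}$) be constructed as follows: $J_1^1$ is the open interval of length $3^{-2/3}$ centered at the midpoint of $[0,M]$; for $n\ge 2$, the intervals $J_n^1,\dots,J_n^{2^{n-1}}$ are the open intervals of length $(3^{2/3})^{-n}$ centered at the midpoints of the $2^{n-1}$ connected components of $[0,M]\setminus(J_1\cup\dots\cup J_{n-1})$, where $J_m=\bigcup_{k=1}^{2^{m-1}}J_m^k$. Let $A=[0,M]\setminus\bigcup_{n\ge1}J_n$. Define $g:[0,M]\to\mathbb{R}$ by $g=0$ on $A$ and $g(x)=\frac{4}{\mathcal{L}(J_n^k)^{1/2}}\mathrm{dist}(x,\partial J_n^k)$ for $x\in J_n^k$, define $f(x)=\int_0^x g(t)\,dt$ for $x\in[0,M]$, and define $F:[0,M]^2\to[0,2]$ by $F(x,y)=f(x)+f(y)$. Then $F$ is a $C^{1,\frac12}$ function (i.e. $C^1$ with $\tfrac12$-Hölder continuous derivatives) and every $t\in[0,2]$ is a critical value of $F$, i.e. there exists $(x,y)\in[0,M]^2$ with $F(x,y)=t$ and $\nabla F(x,y)=(0,0)$.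
   Context: $\mathcal{L}$ denotes Lebesgue measure (length); $\partial J$ is the set of endpoints of an interval $J$. *)

(* Defs.v *)
From HB Require Import structures.
From mathcomp Require Import all_boot all_order all_algebra.
From mathcomp Require Import all_classical all_reals all_analysis.
Set Implicit Arguments. Unset Strict Implicit. Unset Printing Implicit Defensive.
Import Order.TTheory GRing.Theory Num.Theory.
Import numFieldNormedType.Exports.
Local Open Scope classical_set_scope.
Local Open Scope ring_scope.

Section CantorConstruction.
Variable R : realType.

Definition q3 : R := 3 `^ (2 / 3).

Definition Mc : R := (q3 - 2)^-1.

Definition Jlen (n : nat) : R := q3 ^- n.

Definition gap (n : nat) (ab : R * R) : R * R :=
  ((ab.1 + ab.2) / 2 - Jlen n / 2, (ab.1 + ab.2) / 2 + Jlen n / 2).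

Definition split_comp (n : nat) (ab : R * R) : seq (R * R) :=
  [:: (ab.1, (gap n ab).1); ((gap n ab).2, ab.2)].

(* comps m = the list of the 2^m connected components (closed intervals,
   as endpoint pairs) of [0,M] \ (J_1 u ... u J_m). *)
Fixpoint comps (m : nat) : seq (R * R) :=
  match m with
  | 0 => [:: (0, Mc)]
  | m'.+1 => flatten [seq split_comp m'.+1 ab | ab <- comps m']
  end.

(* gaps n (n >= 1) = the list [J_n^1; ...; J_n^(2^(n-1))] (endpoint pairs
   of open intervals): J_n^k is centred at the midpoint of the k-th
   component of [0,M] \ (J_1 u ... u J_(n-1)). *)
Definition gaps (n : nat) : seq (R * R) := [seq gap n ab | ab <- comps n.-1].

Definition Jset (n : nat) : set R :=
  [set x | exists2 J, J \in gaps n & J.1 < x < J.2].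

Definition Aset : set R :=
  `[0, Mc] `\` [set x | exists2 n : nat, (1 <= n)%N & Jset n x].

Definition gfun (x : R) : R :=
  if pselect (Aset x) then 0 else
  xget 0 [set v | exists n : nat, exists2 J, ((1 <= n)%N && (J \in gaps n)) &
             (J.1 < x < J.2) /\
             v = 4 / Num.sqrt (J.2 - J.1) * Num.min (x - J.1) (J.2 - x)].

Definition ffun (x : R) : R := \int[lebesgue_measure]_(t in `[0, x]) gfun t.

Definition FF (p : R * R) : R := ffun p.1 + ffun p.2.

Definition square : set (R * R) :=
  [set p | (0 <= p.1 <= Mc) /\ (0 <= p.2 <= Mc)].

End CantorConstruction.

(* C^{1,1/2} on a set S: differentiable at each point of S, with partial
   derivatives (hence gradient) 1/2-Hoelder continuous on S (which implies
   continuity of the derivatives, i.e. C^1). *)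
Definition C1half (R : realType) (S : set (R * R)) (G : R * R -> R) : Prop :=
  (forall p, S p -> differentiable G p) /\
  exists C : R, forall p q, S p -> S q ->
    forall v : R * R, v = (1, 0) \/ v = (0, 1) ->
      `|'D_v G p - 'D_v G q| <= C * (`|p - q| `^ (1 / 2)).

(* Main.v *)
Require Import Defs.
From HB Require Import structures.
From mathcomp Require Import all_boot all_order all_algebra.
From mathcomp Require Import all_classical all_reals all_analysis.
From mathcomp Require Import ring lra.
Import Order.TTheory GRing.Theory Num.Theory.
Import numFieldNormedType.Exports.
Local Open Scope classical_set_scope.
Local Open Scope ring_scope.

Section Part0.
Variable R : realType.
Local Notation q := (@q3 R).
Local Notation M := (@Mc R).

Lemma q3_cube : q ^+ 3 = 9.
Proof.
rewrite /q3 -powR_mulrn; last exact: powR_ge0.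
rewrite -powRrM.
have -> : (2 / 3 * 3%:R : R) = 2%:R by field.
by rewrite powR_mulrn // expr2; lra.
Qed.

Lemma q3_ge0 : 0 <= q. Proof. exact: powR_ge0. Qed.

Lemma q3_gt2 : 2 < q.
Proof.
have h := q3_cube; have h0 := q3_ge0.
rewrite ltNge; apply/negP => hq.
have : q ^+ 3 <= 8.
  have -> : (8 : R) = 2 ^+ 3 by rewrite !exprS expr0; lra.
  by rewrite lerXn2r // ?nnegrE //.
lra.
Qed.

Lemma q3_gt0 : 0 < q. Proof. have := q3_gt2; lra. Qed.

Lemma q3_le3 : q <= 3.
Proof.
have h := q3_cube; have h0 := q3_ge0.
rewrite leNgt; apply/negP => hq.
have : 3 ^+ 3 < q ^+ 3 by rewrite ltrXn2r // ?nnegrE //; lra.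
rewrite h !exprS expr0; lra.
Qed.

Lemma sqrtq_q : Num.sqrt q * q = 3.
Proof.
have h := q3_cube; have h0 := q3_gt0.
set s := Num.sqrt q.
have s0 : 0 < s by rewrite sqrtr_gt0.
have ss : s ^+ 2 = q by rewrite sqr_sqrtr // ltW.
have e : (s * q) ^+ 2 = 9 by rewrite exprMn ss -(exprD q 1 2) -h.
have sq0 : 0 < s * q by rewrite mulr_gt0.
move: e; rewrite expr2 => e.
have : (s * q - 3) * (s * q + 3) = 0 by rewrite -[RHS](subrr 9); rewrite -{1}e; ring.
move/eqP; rewrite mulf_eq0 => /orP[/eqP|/eqP]; lra.
Qed.

Lemma Mc_eq : M * (q - 2) = 1.
Proof. rewrite /Mc mulVf //; have := q3_gt2; lra. Qed.

Lemma Mc_gt0 : 0 < M.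
Proof. rewrite /Mc invr_gt0; have := q3_gt2; lra. Qed.

Lemma Jlen_gt0 n : 0 < Jlen R n.
Proof. by rewrite /Jlen invr_gt0 exprn_gt0 // q3_gt0. Qed.

Lemma Jlen_le1 n : Jlen R n <= 1.
Proof.
rewrite /Jlen invf_le1 ?exprn_gt0 ?q3_gt0 //.
by rewrite exprn_ege1 //; have := q3_gt2; lra.
Qed.

Lemma JlenS n : Jlen R n.+1 = Jlen R n / q.
Proof. by rewrite /Jlen exprS invfM mulrC. Qed.

Lemma sqrtX (x : R) n : 0 <= x -> Num.sqrt (x ^+ n) = Num.sqrt x ^+ n.
Proof.
move=> x0; elim: n => [|n IH]; first by rewrite !expr0 sqrtr1.
by rewrite !exprS sqrtrM // IH.
Qed.

Lemma Jlen_cube n : Num.sqrt (Jlen R n) * Jlen R n = 3 ^- n.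
Proof.
rewrite /Jlen sqrtrV ?exprn_ge0 ?q3_ge0 // sqrtX ?q3_ge0 //.
by rewrite -invfM -exprMn sqrtq_q.
Qed.

End Part0.

Section Part1.
Context {R : realType}.
Local Notation q := (@q3 R).
Local Notation M := (@Mc R).

Definition cl (m : nat) : R := M / q ^+ m.

Lemma cl_gt0 m : 0 < cl m.
Proof. by rewrite /cl divr_gt0 ?Mc_gt0 // exprn_gt0 // q3_gt0. Qed.

Lemma cl_eq m : cl m - Jlen R m.+1 = 2 * cl m.+1.
Proof.
rewrite /cl /Jlen /Mc exprS.
have q0 : q != 0 by have := q3_gt0 R; rewrite lt0r => /andP[].
have Q0 : q ^+ m != 0 by rewrite expf_neq0.
have q2 : q - 2 != 0 by have := q3_gt2 R; rewrite subr_eq0 => h; apply/eqP; lra.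
field; apply/and3P; split => //.
Qed.

Lemma gap1 {m} {I : R * R} : I.2 - I.1 = cl m -> (gap m.+1 I).1 = I.1 + cl m.+1.
Proof. move=> h; rewrite /gap /=; have := cl_eq m; lra. Qed.

Lemma gap2 {m} {I : R * R} : I.2 - I.1 = cl m -> (gap m.+1 I).2 = I.2 - cl m.+1.
Proof. move=> h; rewrite /gap /=; have := cl_eq m; lra. Qed.

Lemma gap_len n (I : R * R) : (gap n I).2 - (gap n I).1 = Jlen R n.
Proof. rewrite /gap /=; lra. Qed.

Lemma compsS m : comps R m.+1 = flatten [seq split_comp m.+1 ab | ab <- comps R m].
Proof. by []. Qed.

Lemma child {m} {I J : R * R} : I.2 - I.1 = cl m -> J \in split_comp m.+1 I ->
  [/\ J.2 - J.1 = cl m.+1, I.1 <= J.1 & J.2 <= I.2].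
Proof.
move=> hI; have g1 := gap1 hI; have g2 := gap2 hI; have c0 := cl_gt0 m.+1.
have ce := cl_eq m; have jp := Jlen_gt0 R m.+1.
rewrite /split_comp !inE => /orP[] /eqP ->; rewrite ?g1 ?g2 /=; split; lra.
Qed.

Lemma comps_prop {m} {I : R * R} : I \in comps R m ->
  [/\ I.2 - I.1 = cl m, 0 <= I.1 & I.2 <= M].
Proof.
elim: m I => [|m IH] I.
  rewrite /= inE => /eqP -> /=; rewrite /cl expr0 divr1; split; lra.
rewrite compsS => /flatten_mapP [K /IH [hK h1 h2] hI].
have [a b c] := child hK hI; split; lra.
Qed.

Lemma comps_len {m} {I : R * R} : I \in comps R m -> I.2 - I.1 = cl m.
Proof. by case/comps_prop. Qed.

Lemma comps_tri {m} {I J : R * R} : I \in comps R m -> J \in comps R m ->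
  I = J \/ I.2 < J.1 \/ J.2 < I.1.
Proof.
elim: m I J => [|m IH] I J.
  by rewrite /= !inE => /eqP -> /eqP ->; left.
rewrite compsS => /flatten_mapP [K hK hI] /flatten_mapP [K' hK' hJ].
have lK := comps_len hK; have lK' := comps_len hK'.
have [a1 b1 c1] := child lK hI; have [a2 b2 c2] := child lK' hJ.
have cp := cl_gt0 m.+1.
case: (IH _ _ hK hK') => [eK|[lt|lt]]; last 2 first.
- by right; left; lra.
- by right; right; lra.
subst K'.
have gl := gap_len m.+1 K; have jp := Jlen_gt0 R m.+1.
move: hI hJ; rewrite /split_comp !inE => /orP[]/eqP-> /orP[]/eqP->;
  rewrite /=; by [left | right; left; lra | right; right; lra | left].
Qed.

Lemma comps_nest {m k} {I : R * R} : I \in comps R (m + k) ->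
  exists2 K, K \in comps R m & K.1 <= I.1 /\ I.2 <= K.2.
Proof.
elim: k I => [|k IH] I.
  rewrite addn0 => hI; exists I => //; split; lra.
rewrite addnS compsS => /flatten_mapP [K hK hI].
have [a b c] := child (comps_len hK) hI.
have [K' hK' [d e]] := IH _ hK.
exists K' => //; split; lra.
Qed.

Lemma gap_comps {m} {K I : R * R} : K \in comps R m -> I \in comps R m.+1 ->
  I.2 <= (gap m.+1 K).1 \/ (gap m.+1 K).2 <= I.1.
Proof.
move=> hK; rewrite compsS => /flatten_mapP [K' hK' hI].
have lK := comps_len hK; have lK' := comps_len hK'.
have [a b c] := child lK' hI.
have g1 := gap1 lK; have g2 := gap2 lK; have cp := cl_gt0 m.+1.
case: (comps_tri hK hK') => [eK|[lt|lt]]; last 2 first.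
- by right; lra.
- by left; lra.
subst K'.
move: hI; rewrite /split_comp !inE => /orP[]/eqP-> /=; [left|right]; lra.
Qed.

Definition isgap (G : R * R) := exists n, (1 <= n)%N && (G \in gaps R n).

Lemma isgapP (G : R * R) : isgap G <->
  exists m, exists2 K, K \in comps R m & G = gap m.+1 K.
Proof.
split.
  case=> n /andP[n1 /mapP [K hK ->]]; case: n n1 hK => // m _ hK; by exists m, K.
case=> m [K hK ->]; exists m.+1; rewrite /= /gaps /=.
by apply/map_f.
Qed.

Lemma gap_in_comp {m} {K : R * R} : K \in comps R m ->
  K.1 < (gap m.+1 K).1 /\ (gap m.+1 K).2 < K.2.
Proof.
move=> hK; have lK := comps_len hK.
rewrite (gap1 lK) (gap2 lK); have := cl_gt0 m.+1; lra.
Qed.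

Lemma gap_disj {G G' : R * R} {x : R} : isgap G -> isgap G' ->
  G.1 < x < G.2 -> G'.1 < x < G'.2 -> G = G'.
Proof.
move=> /isgapP [m [K hK ->]] /isgapP [m' [K' hK' ->]].
wlog le : m m' K K' hK hK' / (m <= m')%N.
  move=> W h1 h2; case: (leqP m m') => mm; first exact: W.
  by apply/esym; apply: W => //; apply: ltnW.
move=> /andP[x1 x2] /andP[y1 y2].
move: le; rewrite leq_eqVlt => /orP[/eqP em|lt].
  subst m'.
  have [gK1 gK2] := gap_in_comp hK; have [gK1' gK2'] := gap_in_comp hK'.
  case: (comps_tri hK hK') => [->//|[lt|lt]]; exfalso; lra.
have [I hI [i1 i2]] : exists2 I, I \in comps R m.+1 & I.1 <= K'.1 /\ K'.2 <= I.2.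
  have e : m' = (m.+1 + (m' - m.+1))%N by rewrite subnKC.
  by rewrite e in hK'; exact: comps_nest hK'.
have [gK1' gK2'] := gap_in_comp hK'.
case: (gap_comps hK hI) => ?; exfalso; lra.
Qed.

Lemma gap_sub {G : R * R} : isgap G -> 0 < G.1 /\ G.2 <= M.
Proof.
move=> /isgapP [m [K hK ->]].
have [_ a b] := comps_prop hK; have [c d] := gap_in_comp hK; lra.
Qed.

Lemma isgap_len {G : R * R} : isgap G -> exists n, G.2 - G.1 = Jlen R n /\ (1 <= n)%N.
Proof. by move=> /isgapP [m [K hK ->]]; exists m.+1; rewrite gap_len. Qed.

End Part1.

Section Part2.
Context {R : realType}.
Local Notation q := (@q3 R).
Local Notation M := (@Mc R).
Local Notation g := (@gfun R).

Definition tent (G : R * R) (x : R) : R :=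
  4 / Num.sqrt (G.2 - G.1) * Num.min (x - G.1) (G.2 - x).

Lemma gfun_gap {G : R * R} {x} : isgap G -> G.1 < x < G.2 -> g x = tent G x.
Proof.
move=> hG hx; rewrite /gfun; destruct (pselect _) as [hA|nA].
  exfalso; case: hA => _; apply; case: hG => n /andP[n1 nG].
  by exists n => //; exists G.
set S := (X in xget 0 X).
have hS : S (tent G x).
  case: hG => n /andP[n1 nG]; exists n, G; first by rewrite n1.
  by split.
have [n [J /andP[n1 nJ] [xJ ->]]] := xgetPex 0 (ex_intro _ _ hS).
have hJ : isgap J by exists n; rewrite n1.
by rewrite (gap_disj hJ hG xJ hx).
Qed.

Lemma gfun_cases x : g x = 0 \/ exists G, isgap G /\ G.1 < x < G.2.
Proof.
rewrite /gfun; destruct (pselect _) as [hA|nA]; first by left.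
set S := (X in xget 0 X).
case: (pselect (exists v, S v)) => [[v [n [J /andP[n1 nJ] [xJ _]]]] | nS].
  by right; exists J; split => //; exists n; rewrite n1.
by left; apply: xgetPN => v hv; apply: nS; exists v.
Qed.

Lemma tent_ge0 {G : R * R} {x} : G.1 < x < G.2 -> 0 <= tent G x.
Proof.
move=> /andP[h1 h2]; rewrite /tent mulr_ge0 // ?divr_ge0 ?sqrtr_ge0 //.
by rewrite le_min; apply/andP; split; lra.
Qed.

Lemma tent_le {G : R * R} {x} : G.1 < x < G.2 -> tent G x <= 2 * Num.sqrt (G.2 - G.1).
Proof.
move=> /andP[h1 h2]; rewrite /tent.
set L := G.2 - G.1.
have hL : L = G.2 - G.1 by [].
have L0 : 0 < L by lra.
have s0 : 0 < Num.sqrt L by rewrite sqrtr_gt0.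
have sL : Num.sqrt L ^+ 2 = L by rewrite sqr_sqrtr // ltW.
have hm : Num.min (x - G.1) (G.2 - x) <= L / 2.
  rewrite ge_min; case: (lerP (x - G.1) (L / 2)) => //= h; lra.
rewrite mulrAC ler_pdivrMr //.
have : 4 * Num.min (x - G.1) (G.2 - x) <= 4 * (L / 2) by rewrite ler_pM2l //; lra.
rewrite -mulrA -expr2 sL; lra.
Qed.

Lemma sqrt_div_le {e L : R} : 0 <= e -> e <= L -> 0 < L -> e / Num.sqrt L <= Num.sqrt e.
Proof.
move=> e0 eL L0.
have s0 : 0 < Num.sqrt L by rewrite sqrtr_gt0.
have se : Num.sqrt e ^+ 2 = e by rewrite sqr_sqrtr.
have hs : Num.sqrt e <= Num.sqrt L by rewrite ler_sqrt //; lra.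
rewrite ler_pdivrMr // -{1}se expr2; have := sqrtr_ge0 e; nra.
Qed.

Lemma gfun_ge0 x : 0 <= g x.
Proof.
case: (gfun_cases x) => [->//|[G [hG hx]]].
by rewrite (gfun_gap hG hx) tent_ge0.
Qed.

Lemma gfun_le2 x : g x <= 2.
Proof.
case: (gfun_cases x) => [->|[G [hG hx]]]; first lra.
rewrite (gfun_gap hG hx); apply: le_trans (tent_le hx) _.
have [n [-> _]] := isgap_len hG.
have : Num.sqrt (Jlen R n) <= 1.
  by rewrite -sqrtr1 ler_sqrt ?Jlen_le1 //.
lra.
Qed.

Lemma gfun_out x : x <= 0 \/ M < x -> g x = 0.
Proof.
move=> hx; case: (gfun_cases x) => [//|[G [hG /andP[h1 h2]]]].
have [a b] := gap_sub hG; exfalso; case: hx; lra.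
Qed.

Lemma min_lip (a b x y : R) :
  `|Num.min (x - a) (b - x) - Num.min (y - a) (b - y)| <= `|x - y|.
Proof.
have h1 := ler_norm (x - y); have h2 := ler_norm (y - x).
rewrite distrC in h2.
rewrite ler_norml; rewrite /Num.min.
case: ifP => hx; case: ifP => hy; apply/andP; split; lra.
Qed.

Lemma tent_same {G : R * R} {x y} : G.1 < x < G.2 -> G.1 < y < G.2 ->
  `|tent G x - tent G y| <= 4 * Num.sqrt `|x - y|.
Proof.
move=> /andP[x1 x2] /andP[y1 y2].
set L := G.2 - G.1.
have hL : L = G.2 - G.1 by [].
have L0 : 0 < L by lra.
have s0 : 0 < Num.sqrt L by rewrite sqrtr_gt0.
rewrite /tent -mulrBr normrM ger0_norm ?divr_ge0 ?sqrtr_ge0 // -/L.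
have hd := min_lip G.1 G.2 x y.
have hxy : `|x - y| <= L.
  rewrite ler_norml; apply/andP; split; lra.
have hs := sqrt_div_le (normr_ge0 (x - y)) hxy L0.
rewrite -mulrA [_^-1 * _]mulrC.
set D := `|_ - _|.
have : D / Num.sqrt L <= `|x - y| / Num.sqrt L by rewrite ler_pM2r ?invr_gt0.
lra.
Qed.

Lemma tent_far {G : R * R} {x y} : G.1 < x < G.2 -> y <= G.1 \/ G.2 <= y ->
  tent G x <= 4 * Num.sqrt `|x - y|.
Proof.
move=> /andP[x1 x2] hy.
set L := G.2 - G.1.
have hL : L = G.2 - G.1 by [].
have L0 : 0 < L by lra.
set d := Num.min (x - G.1) (G.2 - x).
have d0 : 0 <= d by rewrite le_min; apply/andP; split; lra.
have dL : d <= L by rewrite ge_min; apply/orP; left; lra.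
have dxy : d <= `|x - y|.
  have h1 := ler_norm (x - y); have h2 := ler_norm (y - x); rewrite distrC in h2.
  rewrite ge_min; apply/orP; case: hy => hy; [left|right]; lra.
have := sqrt_div_le d0 dL L0 => hs.
have : Num.sqrt d <= Num.sqrt `|x - y| by rewrite ler_sqrt.
rewrite /tent -/L -/d mulrAC.
have -> : 4 * d / Num.sqrt L = 4 * (d / Num.sqrt L) by rewrite mulrA.
lra.
Qed.

Lemma gbound x y : (exists G, [/\ isgap G, G.1 < x < G.2 & G.1 < y < G.2])
  \/ g x <= 4 * Num.sqrt `|x - y|.
Proof.
case: (gfun_cases x) => [->|[G [hG hx]]].
  by right; rewrite mulr_ge0 ?sqrtr_ge0.
case: (boolP (G.1 < y < G.2)) => hy; first by left; exists G.
right; rewrite (gfun_gap hG hx); apply: tent_far => //.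
move: hy; rewrite negb_and -!leNgt => /orP[h|h]; [left|right] => //.
Qed.

Lemma gfun_hoelder x y : `|g x - g y| <= 8 * Num.sqrt `|x - y|.
Proof.
have s0 := sqrtr_ge0 `|x - y|.
case: (gbound x y) => [[G [hG hx hy]]|bx].
  rewrite (gfun_gap hG hx) (gfun_gap hG hy); have := tent_same hx hy; lra.
case: (gbound y x) => [[G [hG hy hx]]|by_].
  rewrite (gfun_gap hG hx) (gfun_gap hG hy); have := tent_same hx hy; lra.
rewrite distrC in by_.
have gx0 := gfun_ge0 x; have gy0 := gfun_ge0 y.
rewrite ler_norml; apply/andP; split; lra.
Qed.

Lemma gfun_cont : continuous g.
Proof.
move=> x; apply/cvgrPdist_le => e e0.
rewrite near_simpl; apply/nbhs_ballP; exists ((e / 8) ^+ 2).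
  by rewrite /= exprn_gt0 // divr_gt0.
move=> y; rewrite /ball /= => hy.
apply: le_trans (gfun_hoelder x y) _.
have : Num.sqrt `|x - y| <= Num.sqrt ((e / 8) ^+ 2).
  rewrite ler_sqrt ?exprn_ge0 ?ltW //; lra.
have e8 : 0 <= e / 8 by lra.
rewrite sqrtr_sqr (ger0_norm e8); lra.
Qed.

End Part2.

Section Part3.
Context {R : realType}.
Local Notation q := (@q3 R).
Local Notation M := (@Mc R).
Local Notation g := (@gfun R).
Local Notation f := (@ffun R).

Lemma ffun_neg y : y < 0 -> f y = 0.
Proof.
move=> y0; rewrite /ffun set_itv_ge ?Rintegral_set0 //.
by rewrite bnd_simp -ltNge.
Qed.

Lemma Rint0 (D : set R) : \int[@lebesgue_measure R]_(x in D) (0:R) = 0.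
Proof. by rewrite /Rintegral integral0. Qed.

Lemma gint (a b : R) : (@lebesgue_measure R).-integrable `[a, b] (EFin \o g).
Proof.
apply: continuous_compact_integrable; first exact: segment_compact.
exact: continuous_subspaceT gfun_cont.
Qed.

Definition Fm1 (y : R) : R := \int[@lebesgue_measure R]_(t in `[-1, y]) g t.

Lemma ffun_Fm1 y : -1 <= y -> f y = Fm1 y.
Proof.
move=> y1; case: (ltP y 0) => hy.
  rewrite ffun_neg // /Fm1 (@eq_Rintegral _ _ _ _ _ (fun=> 0)) ?Rint0 //.
  move=> t; rewrite inE /= in_itv /= => /andP[_ ty].
  by rewrite gfun_out //; left; lra.
have := @Rintegral_itvB R g (BLeft (-1)) (BRight y) 0 (gint _ _).
rewrite !bnd_simp => /(_ ltac:(lra) hy).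
set I0 := (X in _ - X = _).
have z : I0 = 0.
  rewrite /I0; transitivity (\int[@lebesgue_measure R]_(t in `[(-1:R), 0]) (0:R)); last exact: Rint0.
  apply: eq_Rintegral => t; rewrite inE /= in_itv /= => /andP[_ ty].
  by rewrite gfun_out //; left.
rewrite z subr0 => E; rewrite /ffun /Fm1 -Rintegral_itv_obnd_cbnd.
  exact/esym/E.
by apply: integrableS (gint 0 y) => //; apply: subset_itvr; rewrite bnd_simp.
Qed.

Lemma ffun_derive (x : R) : is_derive x 1 f (g x).
Proof.
case: (ltP x 0) => hx.
  rewrite gfun_out; last by left; lra.
  apply: (@near_eq_is_derive R R^o R^o (cst 0) f x 1 0).
  near=> y; rewrite ffun_neg //.
  by near: y; apply: lt_nbhsl.
have x1 : x < x + 1 by rewrite ltrDl.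
have H := @continuous_FTC1 R g (BLeft (-1)) x (x + 1) x1 (gint _ _).
have [d e] := H ltac:(simpl; rewrite lte_fin; lra) (gfun_cont x).
apply: (@near_eq_is_derive R R^o R^o Fm1 f x 1 (g x)).
  near=> y; rewrite ffun_Fm1 //.
  near: y; have : -1 < x by lra.
  by move/lt_nbhsr; apply: filterS => y /ltW.
by apply: DeriveDef => //; rewrite -derive1E.
Unshelve. all: by end_near.
Qed.

Lemma ffun_derivable (x : R) : derivable f x 1.
Proof. by have [] := ffun_derive x. Qed.

Lemma ffun_cont : continuous f.
Proof.
move=> x; apply: differentiable_continuous.
by apply/derivable1_diffP; exact: ffun_derivable.
Qed.

Lemma ffun_at0 : f 0 = 0.
Proof. by rewrite /ffun set_itv1 Rintegral_set1. Qed.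

End Part3.

Section Part4.
Context {R : realType}.
Local Notation q := (@q3 R).
Local Notation M := (@Mc R).
Local Notation g := (@gfun R).
Local Notation f := (@ffun R).

Lemma der_cont (h d : R -> R) : (forall x : R, is_derive x 1 h (d x)) -> continuous h.
Proof.
move=> H x; apply: differentiable_continuous.
by apply/derivable1_diffP; have [] := H x.
Qed.

Lemma ffun_incr {a b : R} : a <= b -> 0 <= f b - f a <= 2 * (b - a).
Proof.
move=> ab.
have [c _ ->] := @MVT_segment R f g a b ab (fun x _ => ffun_derive x)
  (continuous_subspaceT ffun_cont).
have := gfun_ge0 c; have := gfun_le2 c.
move=> h1 h2; apply/andP; split; first by rewrite mulr_ge0 //; lra.
have : 0 <= (2 - g c) * (b - a) by apply: mulr_ge0; lra.
nra.
Qed.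

Lemma same_incr (f1 f2 d : R -> R) a b : a <= b ->
  (forall x : R, x \in `]a, b[ -> is_derive x 1 f1 (d x)) ->
  (forall x : R, x \in `]a, b[ -> is_derive x 1 f2 (d x)) ->
  continuous f1 -> continuous f2 -> f1 b - f1 a = f2 b - f2 a.
Proof.
move=> ab d1 d2 c1 c2.
have hd : forall x : R, x \in `]a, b[ -> is_derive x 1 (f1 - f2) (d x - d x).
  by move=> x hx; apply: is_deriveB; [exact: d1 | exact: d2].
have hc : {within `[a, b], continuous (f1 - f2)}.
  apply: continuous_subspaceT => x; apply: continuousB; [exact: c1|exact: c2].
have [c _] := @MVT_segment R (f1 - f2) (fun x => d x - d x) a b ab hd hc.
rewrite subrr mul0r /= => /eqP; rewrite subr_eq0 => /eqP.
rewrite !fctE; lra.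
Qed.

Lemma quad_derive (k a : R) (x : R) :
  is_derive x 1 (fun y : R => k * ((y - a) * (y - a))) (k * (2 * (x - a))).
Proof.
have H1 : is_derive x 1 (fun y : R => y - a) 1.
  have := is_deriveB (is_derive_id x (1:R)) (is_derive_cst a x 1).
  by rewrite subr0.
have H2 := is_deriveM H1 H1.
have H3 := is_deriveZ k H2.
apply: is_derive_eq H3 _.
rewrite /GRing.scale /=; ring.
Qed.

Lemma tent_left (G : R * R) x : G.1 < x <= (G.1 + G.2) / 2 ->
  tent G x = 4 / Num.sqrt (G.2 - G.1) * (x - G.1).
Proof. move=> /andP[h1 h2]; rewrite /tent min_l //; lra. Qed.

Lemma tent_right (G : R * R) x : (G.1 + G.2) / 2 <= x < G.2 ->
  tent G x = 4 / Num.sqrt (G.2 - G.1) * (G.2 - x).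
Proof. move=> /andP[h1 h2]; rewrite /tent min_r //; lra. Qed.

Lemma gap_incr (G : R * R) : isgap G ->
  f G.2 - f G.1 = Num.sqrt (G.2 - G.1) * (G.2 - G.1).
Proof.
move=> hG.
have [n [hLn _]] := isgap_len hG.
set a := G.1; set b := G.2; set L := b - a; set s := Num.sqrt L.
have hL : L = b - a by [].
have L0 : 0 < L by rewrite /L hLn Jlen_gt0.
have s0 : 0 < s by rewrite sqrtr_gt0.
have sL : s * s = L by rewrite -expr2 sqr_sqrtr // ltW.
set m := (a + b) / 2.
have hm : m = (a + b) / 2 by [].
set k := 2 / s.
have e1 := @same_incr f (fun y => k * ((y - a) * (y - a))) (fun x => k * (2 * (x - a))) a m.
have {e1} e1 : f m - f a = (fun y => k * ((y - a) * (y - a))) m - (fun y => k * ((y - a) * (y - a))) a.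
  apply: e1.
  - lra.
  - move=> x; rewrite in_itv /= => /andP[h1 h2].
    rewrite -[X in is_derive _ _ _ X](_ : g x = _); first exact: ffun_derive.
    rewrite (gfun_gap hG); last by apply/andP; split; rewrite -/a -/b; lra.
    rewrite tent_left -/a -/b; last by apply/andP; split; rewrite /m in h2; lra.
    rewrite /k -/L -/s; field; lra.
  - by move=> x _; apply: quad_derive.
  - exact: ffun_cont.
  - exact: der_cont (fun x => quad_derive k a x).
have e2 := @same_incr f (fun y => - k * ((y - b) * (y - b))) (fun x => - k * (2 * (x - b))) m b.
have {e2} e2 : f b - f m = (fun y => - k * ((y - b) * (y - b))) b - (fun y => - k * ((y - b) * (y - b))) m.
  apply: e2.
  - lra.
  - move=> x; rewrite in_itv /= => /andP[h1 h2].
    rewrite -[X in is_derive _ _ _ X](_ : g x = _); first exact: ffun_derive.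
    rewrite (gfun_gap hG); last by apply/andP; split; rewrite -/a -/b; lra.
    rewrite tent_right -/a -/b; last by apply/andP; split; rewrite /m in h1; lra.
    rewrite /k -/L -/s; field; lra.
  - by move=> x _; apply: quad_derive.
  - exact: ffun_cont.
  - exact: der_cont (fun x => quad_derive (- k) b x).
rewrite /= in e1 e2.
have hm1 : m - a = L / 2 by rewrite /m /L; field.
have hm2 : m - b = - (L / 2) by rewrite /m /L; field.
have -> : f b - f a = (f m - f a) + (f b - f m) by ring.
rewrite e1 e2 hm1 hm2 /k.
clearbody L s k m; clear e1 e2 hm1 hm2 hL hm.
have sn : s != 0 by rewrite gt_eqF.
rewrite -sL; field; exact: sn.
Qed.

Lemma comp_gap_incr {m} {K : R * R} : K \in comps R m ->
  f (gap m.+1 K).2 - f (gap m.+1 K).1 = 3 ^- m.+1.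
Proof.
move=> hK; have hG : isgap (gap m.+1 K) by apply/isgapP; exists m, K.
by rewrite (gap_incr _ hG) gap_len Jlen_cube.
Qed.

End Part4.

Section Part5.
Context {R : realType}.
Local Notation q := (@q3 R).
Local Notation M := (@Mc R).
Local Notation g := (@gfun R).
Local Notation f := (@ffun R).

Lemma geo_zero (e C r : R) : 0 <= r < 1 -> (forall k, `|e| <= C * r ^+ k) -> e = 0.
Proof.
move=> /andP[r0 r1] H.
have hr : `|r| < 1 by rewrite ger0_norm.
have cv : (fun k => C * r ^+ k) @ \oo --> C * 0.
  exact: (cvgM (cvg_cst C) (cvg_expr hr)).
have hn : \forall k \near \oo, `|e| <= C * r ^+ k by apply: nearW.
have := limr_ge (cvgP _ cv) hn.
rewrite (cvg_lim _ cv) // mulr0 => h.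
by apply/normr0_eq0/eqP; rewrite eq_le h normr_ge0.
Qed.

Definition Dd (I : R * R) : R := f I.2 - f I.1.

Lemma three_S m : (3 : R) ^- m = 3 * 3 ^- m.+1.
Proof. by rewrite exprS invfM mulrA mulfV ?mul1r // pnatr_eq0. Qed.

Lemma D_split {m} {K : R * R} : K \in comps R m ->
  Dd K - 3 ^- m = (Dd (K.1, (gap m.+1 K).1) - 3 ^- m.+1)
                  + (Dd ((gap m.+1 K).2, K.2) - 3 ^- m.+1).
Proof.
move=> hK; have h := comp_gap_incr hK.
rewrite (three_S m).
set G := gap m.+1 K in h *.
rewrite /Dd /=.
have -> : f K.2 - f K.1 = (f G.1 - f K.1) + (f G.2 - f G.1) + (f K.2 - f G.2) by ring.
rewrite h; ring.
Qed.

Lemma children_in {m} {K : R * R} : K \in comps R m ->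
  (K.1, (gap m.+1 K).1) \in comps R m.+1 /\ ((gap m.+1 K).2, K.2) \in comps R m.+1.
Proof.
move=> hK; rewrite compsS; split; apply/flatten_mapP; exists K => //;
  by rewrite /split_comp !inE eqxx ?orbT.
Qed.

Lemma E_bound k {m} {K : R * R} : K \in comps R m ->
  `|Dd K - 3 ^- m| <= 2 ^+ k * (2 * cl (m + k) + 3 ^- (m + k)).
Proof.
elim: k m K => [|k IH] m K hK.
  rewrite addn0 expr0 mul1r.
  have [_ _ l] := comps_prop hK.
  have hl := comps_len hK; have c0 := @cl_gt0 R m.
  have := @ffun_incr R K.1 K.2 ltac:(lra).
  rewrite hl => /andP[h1 h2].
  have t0 : 0 < (3 : R) ^- m by rewrite invr_gt0 exprn_gt0.
  rewrite /Dd ler_norml; apply/andP; split; lra.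
have [c1 c2] := children_in hK.
have e1 := IH _ _ c1; have e2 := IH _ _ c2.
rewrite addSnnS in e1 e2.
rewrite (D_split hK).
set B := (2 * cl (m + k.+1) + 3 ^- (m + k.+1)) in e1 e2 *.
have -> : (2:R) ^+ k.+1 * B = 2 ^+ k * B + 2 ^+ k * B by rewrite exprS; ring.
apply: le_trans (ler_normD _ _) _; lra.
Qed.

Lemma E_bound2 k {m} {K : R * R} : K \in comps R m ->
  `|Dd K - 3 ^- m| <= (2 * M + 1) * (2 / q) ^+ k.
Proof.
move=> hK; apply: le_trans (E_bound k hK) _.
have q1 : 1 <= q by have := q3_gt2 R; lra.
have q0 : 0 < q := q3_gt0 R.
have qk0 : 0 < q ^+ k by rewrite exprn_gt0.
have h1 : cl (m + k) <= M / q ^+ k.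
  rewrite /cl ler_pM2l ?Mc_gt0 // lef_pV2 ?posrE ?exprn_gt0 //.
  exact: ler_weXn2l (leq_addl _ _).
have h2 : (3 : R) ^- (m + k) <= (q ^+ k)^-1.
  rewrite lef_pV2 ?posrE ?exprn_gt0 //.
  apply: (@le_trans _ _ (3 ^+ k)).
    by rewrite lerXn2r ?nnegrE ?q3_le3 // ltW.
  apply: ler_weXn2l (leq_addl _ _); lra.
have -> : (2 * M + 1) * (2 / q) ^+ k = 2 ^+ k * (2 * (M / q ^+ k) + (q ^+ k)^-1).
  rewrite exprMn exprVn; field; by rewrite gt_eqF.
have p2 : 0 < (2 : R) ^+ k by rewrite exprn_gt0.
rewrite ler_pM2l //; lra.
Qed.

Lemma D_comp {m} {K : R * R} : K \in comps R m -> Dd K = 3 ^- m.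
Proof.
move=> hK; apply/eqP; rewrite -subr_eq0; apply/eqP.
apply: (@geo_zero _ (2 * M + 1) (2 / q)); last by move=> k; exact: E_bound2.
have q2 := q3_gt2 R; have q0 := q3_gt0 R.
apply/andP; split; first by rewrite divr_ge0 // ltW.
by rewrite ltr_pdivrMr // mul1r.
Qed.

Lemma ffunM : f M = 1.
Proof.
have h : ((0 : R), M) \in comps R 0 by rewrite /= inE.
by have := D_comp h; rewrite /Dd /= ffun_at0 subr0 expr0 invr1.
Qed.

Lemma ffun_range x : 0 <= x <= M -> 0 <= f x <= 1.
Proof.
move=> /andP[h1 h2].
have := ffun_incr h1; have := ffun_incr h2; rewrite ffun_at0 ffunM.
move=> /andP[a _] /andP[b _]; apply/andP; split; lra.
Qed.

End Part5.

Section Part6.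
Context {R : realType}.
Local Notation g := (@gfun R).
Local Notation f := (@ffun R).

Lemma fst_cont : continuous (@fst R R).
Proof. by move=> x; exact: cvg_fst. Qed.

Lemma snd_cont : continuous (@snd R R).
Proof. by move=> x; exact: cvg_snd. Qed.

Lemma FF_eq : @FF R = (f \o fst) + (f \o snd).
Proof. by apply/funext => p. Qed.

Lemma f_diff (x : R) : differentiable f x.
Proof. by apply/derivable1_diffP; exact: ffun_derivable. Qed.

Lemma FF_diff (p : R * R) : differentiable (@FF R) p.
Proof.
rewrite FF_eq; apply: differentiableD; apply: differentiable_comp.
- exact: (linear_differentiable _ fst_cont).
- exact: f_diff.
- exact: (linear_differentiable _ snd_cont).
- exact: f_diff.
Qed.

Lemma f_der1 (x : R) : derive1 f x = g x.
Proof. by rewrite derive1E; have [_ ->] := ffun_derive x. Qed.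

Lemma Dfst (p v : R * R) : 'D_v (f \o fst) p = 'D_(v.1) f p.1.
Proof. by rewrite /derive /=. Qed.

Lemma Dsnd (p v : R * R) : 'D_v (f \o snd) p = 'D_(v.2) f p.2.
Proof. by rewrite /derive /=. Qed.

Lemma Df1 (x : R) : 'D_1 f x = g x.
Proof. by have [_ ->] := ffun_derive x. Qed.

Lemma FF_Dv (p v : R * R) : 'D_v (@FF R) p = 'D_(v.1) f p.1 + 'D_(v.2) f p.2.
Proof.
have dfst : differentiable (@fst R R) p := linear_differentiable _ fst_cont.
have dsnd : differentiable (@snd R R) p := linear_differentiable _ snd_cont.
have d1 : differentiable (f \o fst) p := differentiable_comp dfst (f_diff _).
have d2 : differentiable (f \o snd) p := differentiable_comp dsnd (f_diff _).
have e1 : derivable (f \o fst) p v by apply: diff_derivable.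
have e2 : derivable (f \o snd) p v by apply: diff_derivable.
rewrite FF_eq (@deriveD _ _ _ (f \o fst) (f \o snd) p v e1 e2).
by rewrite Dfst Dsnd.
Qed.

Lemma FF_D10 (p : R * R) : 'D_((1, 0) : R * R) (@FF R) p = g p.1.
Proof. by rewrite FF_Dv /= derive0 Df1 addr0. Qed.

Lemma FF_D01 (p : R * R) : 'D_((0, 1) : R * R) (@FF R) p = g p.2.
Proof. by rewrite FF_Dv /= derive0 Df1 add0r. Qed.

Lemma FF_hoelder (p r : R * R) (v : R * R) : v = (1, 0) \/ v = (0, 1) ->
  `|'D_v (@FF R) p - 'D_v (@FF R) r| <= 8 * (`|p - r| `^ (1 / 2)).
Proof.
have pr := prod_normE (p - r).
rewrite div1r powR12_sqrt //.
case=> ->; rewrite ?FF_D10 ?FF_D01.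
- apply: le_trans (gfun_hoelder _ _) _.
  rewrite ler_pM2l // ler_sqrt // pr le_max; apply/orP; left.
  by [].
- apply: le_trans (gfun_hoelder _ _) _.
  rewrite ler_pM2l // ler_sqrt // pr le_max; apply/orP; right.
  by [].
Qed.

End Part6.

Section Part7.
Context {R : realType}.
Local Notation q := (@q3 R).
Local Notation M := (@Mc R).
Local Notation g := (@gfun R).
Local Notation f := (@ffun R).

Lemma nested_pt (lo hi : nat -> R) :
  (forall m, lo m <= hi m) -> (forall m, lo m <= lo m.+1) -> (forall m, hi m.+1 <= hi m) ->
  exists x, forall m, lo m <= x <= hi m.
Proof.
move=> lh l1 h1.
have lmono : forall m d, lo m <= lo (m + d)%N.
  move=> m; elim=> [|d IH]; first by rewrite addn0.
  by rewrite addnS; apply: le_trans IH (l1 _).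
have hmono : forall m d, hi (m + d)%N <= hi m.
  move=> m; elim=> [|d IH]; first by rewrite addn0.
  by rewrite addnS; apply: le_trans (h1 _) IH.
have lh2 : forall k m, lo k <= hi m.
  move=> k m; case: (leqP k m) => km.
    by rewrite -(subnKC km); apply: le_trans (lmono k (m - k)%N) (lh _).
  have km' := ltnW km.
  by rewrite -(subnKC km'); apply: le_trans (lh _) (hmono m (k - m)%N).
set E := range lo.
have E0 : E !=set0 by exists (lo 0), 0.
have Eub : ubound E (hi 0) by move=> _ [k _ <-]; exact: lh2.
exists (sup E) => m; apply/andP; split.
  by apply: ub_le_sup; [exists (hi 0) | exists m].
by apply: ge_sup => // _ [k _ <-]; exact: lh2.
Qed.

Lemma g_zero_nested x : (forall m, exists2 I, I \in comps R m & I.1 <= x <= I.2) -> g x = 0.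
Proof.
move=> H; case: (gfun_cases x) => [//|[G [/isgapP [m [K hK ->]] /andP[x1 x2]]]].
have [I hI /andP[i1 i2]] := H m.+1.
by case: (gap_comps hK hI) => h; exfalso; lra.
Qed.

Variable t : R.

Definition Pc (m : nat) (IJ : (R * R) * (R * R)) : Prop :=
  [/\ IJ.1 \in comps R m, IJ.2 \in comps R m &
      f IJ.1.1 + f IJ.2.1 <= t <= f IJ.1.1 + f IJ.2.1 + 2 * 3 ^- m].

Definition subI (I' I : R * R) := I.1 <= I'.1 /\ I'.2 <= I.2.

Lemma comp_vals {m} {I : R * R} : I \in comps R m ->
  f (gap m.+1 I).1 = f I.1 + 3 ^- m.+1 /\ f (gap m.+1 I).2 = f I.1 + 2 * 3 ^- m.+1.
Proof.
move=> hI; have [c1 c2] := children_in hI.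
have d0 := D_comp hI; have d1 := D_comp c1; have d2 := D_comp c2.
rewrite /Dd /= three_S in d0 d1 d2; split; lra.
Qed.

Lemma step {m IJ} : Pc m IJ ->
  exists IJ', Pc m.+1 IJ' /\ subI IJ'.1 IJ.1 /\ subI IJ'.2 IJ.2.
Proof.
case: IJ => I J [/= hI hJ /andP[t1 t2]].
have [cI1 cI2] := children_in hI; have [cJ1 cJ2] := children_in hJ.
have [vI1 vI2] := comp_vals hI; have [vJ1 vJ2] := comp_vals hJ.
have [lI1 lI2] := gap_in_comp hI; have [lJ1 lJ2] := gap_in_comp hJ.
have lI := comps_len hI; have lJ := comps_len hJ.
have cp := @cl_gt0 R m.+1; have cm := @cl_gt0 R m.
have g1I := gap1 lI; have g2I := gap2 lI; have g1J := gap1 lJ; have g2J := gap2 lJ.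
rewrite three_S in t2.
have glI := gap_len m.+1 I; have glJ := gap_len m.+1 J; have jp := Jlen_gt0 R m.+1.
set GI := gap m.+1 I in cI1 cI2 vI1 vI2 lI1 lI2 g1I g2I glI *.
set GJ := gap m.+1 J in cJ1 cJ2 vJ1 vJ2 lJ1 lJ2 g1J g2J glJ *.
case: (lerP t (f I.1 + f J.1 + 2 * 3 ^- m.+1)) => h1.
  exists ((I.1, GI.1), (J.1, GJ.1)).
  split; [split => //=; apply/andP; split; lra | rewrite /subI /=; split; split; lra].
case: (lerP t (f I.1 + f J.1 + 4 * 3 ^- m.+1)) => h2.
  exists ((GI.2, I.2), (J.1, GJ.1)).
  split; [split => //=; rewrite vI2; apply/andP; split; lra | rewrite /subI /=; split; split; lra].
exists ((GI.2, I.2), (GJ.2, J.2)).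
split; [split => //=; rewrite vI2 vJ2; apply/andP; split; lra | rewrite /subI /=; split; split; lra].
Qed.

Definition stepf (m : nat) (IJ : (R * R) * (R * R)) : (R * R) * (R * R) :=
  xget IJ [set IJ' | Pc m.+1 IJ' /\ subI IJ'.1 IJ.1 /\ subI IJ'.2 IJ.2].

Fixpoint seqIJ (m : nat) : (R * R) * (R * R) :=
  match m with
  | 0 => ((0, M), (0, M))
  | m'.+1 => stepf m' (seqIJ m')
  end.

Lemma seqIJ_P (t0 : 0 <= t <= 2) m :
  Pc m (seqIJ m) /\ subI (seqIJ m.+1).1 (seqIJ m).1 /\ subI (seqIJ m.+1).2 (seqIJ m).2.
Proof.
have base : Pc 0 (seqIJ 0).
  split; rewrite /= ?inE //.
  by rewrite ffun_at0 expr0 invr1; move: t0 => /andP[a b]; apply/andP; split; lra.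
have stepP : forall m, Pc m (seqIJ m) -> Pc m.+1 (seqIJ m.+1) /\
    subI (seqIJ m.+1).1 (seqIJ m).1 /\ subI (seqIJ m.+1).2 (seqIJ m).2.
  move=> k hk; have [IJ' hIJ'] := step hk.
  exact: (@xgetPex _ (seqIJ k)
    [set IJ' | Pc k.+1 IJ' /\ subI IJ'.1 (seqIJ k).1 /\ subI IJ'.2 (seqIJ k).2]
    (ex_intro _ IJ' hIJ')).
elim: m => [|m [Pm _]]; first by have [a b] := stepP 0 base; split.
have [a b] := stepP m Pm; split => //.
by have [] := stepP m.+1 a.
Qed.

Lemma crit (t0 : 0 <= t <= 2) :
  exists x y, [/\ 0 <= x <= M, 0 <= y <= M, f x + f y = t, g x = 0 & g y = 0].
Proof.
have HP := seqIJ_P t0.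
have len1 m : (seqIJ m).1.1 <= (seqIJ m).1.2.
  have [[h _ _] _] := HP m; have := comps_len h; have := @cl_gt0 R m; lra.
have len2 m : (seqIJ m).2.1 <= (seqIJ m).2.2.
  have [[_ h _] _] := HP m; have := comps_len h; have := @cl_gt0 R m; lra.
have [x hx] := @nested_pt (fun m => (seqIJ m).1.1) (fun m => (seqIJ m).1.2) len1
  (fun m => (HP m).2.1.1) (fun m => (HP m).2.1.2).
have [y hy] := @nested_pt (fun m => (seqIJ m).2.1) (fun m => (seqIJ m).2.2) len2
  (fun m => (HP m).2.2.1) (fun m => (HP m).2.2.2).
exists x, y; split.
- by have := hx 0; rewrite /=.
- by have := hy 0; rewrite /=.
- apply/eqP; rewrite -subr_eq0; apply/eqP.
  apply: (@geo_zero _ _ 2 (3^-1)).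
    by apply/andP; split; [rewrite invr_ge0 | rewrite invf_lt1 //; lra].
  move=> m; have [[h1 h2 /andP[t1 t2]] _] := HP m.
  have /andP[x1 x2] := hx m; have /andP[y1 y2] := hy m.
  have d1 := D_comp h1; have d2 := D_comp h2; rewrite /Dd in d1 d2.
  have := ffun_incr x1; have := ffun_incr x2; have := ffun_incr y1; have := ffun_incr y2.
  move=> /andP[a1 _] /andP[a2 _] /andP[a3 _] /andP[a4 _].
  rewrite -exprVn in t2 d1 d2 *.
  rewrite ler_norml; apply/andP; split; lra.
- apply: g_zero_nested => m; exists (seqIJ m).1; first by have [[]] := HP m.
  exact: hx.
- apply: g_zero_nested => m; exists (seqIJ m).2; first by have [[]] := HP m.
  exact: hy.
Qed.

End Part7.

Theorem mainTheorem3 (R : realType) :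
  (forall p, @square R p -> 0 <= @FF R p <= 2) /\
  C1half (@square R) (@FF R) /\
  (forall t : R, 0 <= t <= 2 ->
     exists p, @square R p /\ @FF R p = t /\
       'D_(1, 0) (@FF R) p = 0 /\ 'D_(0, 1) (@FF R) p = 0).
Proof.
split.
  move=> p [ha hb]; rewrite /FF.
  have := @ffun_range R p.1 ha; have := @ffun_range R p.2 hb.
  move=> /andP[a1 a2] /andP[b1 b2]; apply/andP; split; lra.
split.
  split; first by move=> p _; exact: FF_diff.
  by exists 8 => p r _ _ v hv; exact: FF_hoelder.
move=> t ht; have [x [y [hx hy hf gx gy]]] := @crit R t ht.
exists (x, y); split; first by split.
split; first by rewrite /FF.
by rewrite FF_D10 FF_D01 /= gx gy.
Qed.
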